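(* Let $\mathcal{U}\subseteq\mathcal{E}$ be a dead-ending universe and let $\mathcal{A}$ be the set of Left ends of $\mathcal{U}$. Then for every Left dead-end $G$ the following are equivalent: (i) $G\notin\operatorname{up}(\mathcal{A})$; (ii) $G^\circ$ is Left $\mathcal{U}$-strong; (iii) $G^{\circledast}\geq_\mathcal{U} 0$.
   Context: All games are finite partizan games; $\cong$ is identity of game trees; $o(G)$ is the misère outcome class, ordered $\mathscr{L} > \mathscr{N} > \mathscr{R}$, $\mathscr{L} > \mathscr{P} > \mathscr{R}$. A universe is a set of games closed under options, disjunctive sums, conjugates, and forming $\{\mathscr{G}^L\mid\mathscr{G}^R\}$ from nonempty finite subsets of it. For a universe $\mathcal{U}$ and arbitrary games $G,H$, $G\geq_\mathcal{U} H$ means $o(G+X)\geq o(H+X)$ for all $X\in\mathcal{U}$. A Left (Right) end is a game with no Left (Right) option; a Left dead-end is a game all of whose subpositions are Left ends, and similarly for Right; $\mathcal{L}$ denotes the set of Left dead-ends. $\mathcal{E}$ is the set of games in which every subposition that is an end is a (Left or Right) dead-end; a universe contained in $\mathcal{E}$ is dead-ending. For Left dead-ends, $G\geq H$ means $G\geq_\mathcal{V} H$ for every universe $\mathcal{V}$. For a set $\mathcal{A}$ of Left dead-ends, $\operatorname{cl}(\mathcal{A})$ is the smallest set containing $\mathcal{A}$ closed under options and sums, and $\operatorname{up}(\mathcal{A})=\{G\in\mathcal{L}: G\geq H\text{ for some }H\in\operatorname{cl}(\mathcal{A})\}$. $G$ is Left $\mathcal{U}$-strong if $o(G+X)\geq\mathscr{N}$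 for every Left end $X\in\mathcal{U}$. For a Left dead-end $G$: the adjoint is $G^\circ=*=\{0\mid 0\}$ if $G\cong 0$, and $G^\circ=\{(G^R)^\circ\mid 0\}$ otherwise ($G^R$ ranging over Right options of $G$); the Left-modified adjoint is $G^{\circledast}=\{0\mid *\}$ if $G\cong 0$ and $G^{\circledast}=\{(G^R)^\circ\mid *\}$ otherwise. *)

(* Defs.v *)
From Stdlib Require Import List.
Import ListNotations.

Inductive game : Type := Game : list game -> list game -> game.

Definition lefts (g : game) : list game := match g with Game l _ => l end.
Definition rights (g : game) : list game := match g with Game _ r => r end.

Definition zero : game := Game [] [].
Definition star : game := Game [zero] [zero].

Inductive ident : game -> game -> Prop :=
| ident_intro gl gr hl hr :
    (forall x, In x gl -> exists y, In y hl /\ ident x y) ->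
    (forall y, In y hl -> exists x, In x gl /\ ident x y) ->
    (forall x, In x gr -> exists y, In y hr /\ ident x y) ->
    (forall y, In y hr -> exists x, In x gr /\ ident x y) ->
    ident (Game gl gr) (Game hl hr).

Fixpoint add (g h : game) {struct g} : game :=
  match g with
  | Game gl gr =>
      (fix addh (h : game) : game :=
         match h with
         | Game hl hr =>
             Game (map (fun x => add x h) gl ++ map addh hl)
                  (map (fun x => add x h) gr ++ map addh hr)
         end) h
  end.

Fixpoint conj (g : game) : game :=
  match g with Game l r => Game (map conj r) (map conj l) end.

(** Misère play: the player unable to move wins.
    lwin g : Left wins g moving first;  rwin g : Right wins g moving first. *)
Fixpoint lwin (g : game) : bool :=
  match g with
  | Game ls _ => match ls with
                 | [] => true
                 | _ => existsb (fun x => negb (rwin x)) ls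
                 end
  end
with rwin (g : game) : bool :=
  match g with
  | Game _ rs => match rs with
                 | [] => true
                 | _ => existsb (fun x => negb (lwin x)) rs
                 end
  end.

Inductive outcome : Type := OL | ON | OP | OR.

Definition o (g : game) : outcome :=
  match lwin g, rwin g with
  | true, false => OL
  | true, true => ON
  | false, false => OP
  | false, true => OR
  end.

Definition outcome_ge (a b : outcome) : bool :=
  match a, b with
  | OL, _ => true
  | _, OR => true
  | ON, ON => true
  | OP, OP => true
  | _, _ => false
  end.

Definition universe (U : game -> Prop) : Prop :=
  (forall g h, U g -> ident g h -> U h) /\
  (forall g x, U g -> In x (lefts g) -> U x) /\
  (forall g x, U g -> In x (rights g) -> U x) /\
  (forall g h, U g -> U h -> U (add g h)) /\
  (forall g, U g -> U (conj g)) /\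
  (forall l r, l <> [] -> r <> [] ->
     (forall x, In x l -> U x) -> (forall x, In x r -> U x) -> U (Game l r)).

Definition geU (U : game -> Prop) (g h : game) : Prop :=
  forall X, U X -> outcome_ge (o (add g X)) (o (add h X)) = true.

Inductive subpos : game -> game -> Prop :=
| subpos_refl g : subpos g g
| subpos_left g x s : In x (lefts g) -> subpos x s -> subpos g s
| subpos_right g x s : In x (rights g) -> subpos x s -> subpos g s.

Definition left_end (g : game) : Prop := lefts g = [].
Definition right_end (g : game) : Prop := rights g = [].

Definition left_dead_end (g : game) : Prop := forall s, subpos g s -> left_end s.
Definition right_dead_end (g : game) : Prop := forall s, subpos g s -> right_end s.

Definition in_E (g : game) : Prop :=
  forall s, subpos g s -> (left_end s \/ right_end s) ->
            left_dead_end s \/ right_dead_end s.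

(** For Left dead-ends: G >= H iff G >=_V H for every universe V. *)
Definition dge (g h : game) : Prop :=
  forall V, universe V -> geU V g h.

Inductive cl (A : game -> Prop) : game -> Prop :=
| cl_base g : A g -> cl A g
| cl_left g x : cl A g -> In x (lefts g) -> cl A x
| cl_right g x : cl A g -> In x (rights g) -> cl A x
| cl_add g h : cl A g -> cl A h -> cl A (add g h).

Definition up (A : game -> Prop) (g : game) : Prop :=
  left_dead_end g /\ exists h, cl A h /\ dge g h.

Definition left_strong (U : game -> Prop) (g : game) : Prop :=
  forall X, U X -> left_end X -> outcome_ge (o (add g X)) ON = true.

Fixpoint adjoint (g : game) : game :=
  match g with
  | Game [] [] => star
  | Game _ rs => Game (map adjoint rs) [zero]
  end.

Definition ladjoint (g : game) : game :=
  match g with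
  | Game [] [] => Game [zero] [star]
  | Game _ rs => Game (map adjoint rs) [star]
  end.

(* Main.v *)
Require Import Defs.
From Stdlib Require Import List Bool.
Import ListNotations.

Definition game_ind' (P : game -> Prop)
  (H : forall l r, (forall x, In x l -> P x) -> (forall x, In x r -> P x) -> P (Game l r)) :
  forall g, P g :=
  fix F g := match g with Game l r =>
    H l r
     ((fix fl (l : list game) : forall x, In x l -> P x :=
        match l return forall x, In x l -> P x with
        | [] => fun x (h : In x []) => False_ind _ h
        | y :: t => fun x (h : In x (y :: t)) =>
            match h with
            | or_introl e => eq_ind y P (F y) x e
            | or_intror h' => fl t x h'
            end
        end) l)
     ((fix fl (l : list game) : forall x, In x l -> P x :=
        match l return forall x, In x l -> P x with
        | [] => fun x (h : In x []) => False_ind _ h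
        | y :: t => fun x (h : In x (y :: t)) =>
            match h with
            | or_introl e => eq_ind y P (F y) x e
            | or_intror h' => fl t x h'
            end
        end) r)
  end.

Lemma lwin_iff g : lwin g = true <-> lefts g = [] \/ exists x, In x (lefts g) /\ rwin x = false.
Proof.
  destruct g as [[|y t] r].
  - simpl. split; auto.
  - change (existsb (fun x => negb (rwin x)) (y::t) = true <->
      y :: t = [] \/ exists x, In x (y::t) /\ rwin x = false).
    rewrite existsb_exists. split.
    + intros (x & Hx & Hn). right. exists x. split; auto. destruct (rwin x); simpl in *; congruence.
    + intros [H|(x & Hx & Hn)]; [discriminate|]. exists x. rewrite Hn. auto.
Qed.

Lemma rwin_iff g : rwin g = true <-> rights g = [] \/ exists x, In x (rights g) /\ lwin x = false.
Proof.
  destruct g as [l [|y t]].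
  - simpl. split; auto.
  - change (existsb (fun x => negb (lwin x)) (y::t) = true <->
      y :: t = [] \/ exists x, In x (y::t) /\ lwin x = false).
    rewrite existsb_exists. split.
    + intros (x & Hx & Hn). right. exists x. split; auto. destruct (lwin x); simpl in *; congruence.
    + intros [H|(x & Hx & Hn)]; [discriminate|]. exists x. rewrite Hn. auto.
Qed.

Lemma lefts_add g h : lefts (add g h) = map (fun x => add x h) (lefts g) ++ map (fun y => add g y) (lefts h).
Proof. destruct g, h. reflexivity. Qed.
Lemma rights_add g h : rights (add g h) = map (fun x => add x h) (rights g) ++ map (fun y => add g y) (rights h).
Proof. destruct g, h. reflexivity. Qed.

Lemma lwin_lefts a b : lefts a = lefts b -> lwin a = lwin b.
Proof. destruct a as [la ra], b as [lb rb]; simpl; intros ->. destruct lb; reflexivity. Qed.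

Lemma lwin_false g : lwin g = false -> lefts g <> [] /\ forall x, In x (lefts g) -> rwin x = true.
Proof.
  intros H. split.
  - intros E. assert (lwin g = true) by (apply lwin_iff; auto). congruence.
  - intros x Hx. destruct (rwin x) eqn:E; auto.
    assert (lwin g = true) by (apply lwin_iff; eauto). congruence.
Qed.
Lemma rwin_false g : rwin g = false -> rights g <> [] /\ forall x, In x (rights g) -> lwin x = true.
Proof.
  intros H. split.
  - intros E. assert (rwin g = true) by (apply rwin_iff; auto). congruence.
  - intros x Hx. destruct (lwin x) eqn:E; auto.
    assert (rwin g = true) by (apply rwin_iff; eauto). congruence.
Qed.

Lemma outcome_ge_of a b : (lwin b = true -> lwin a = true) -> (rwin a = true -> rwin b = true) ->
  outcome_ge (o a) (o b) = true.
Proof. unfold o. destruct (lwin a), (rwin a), (lwin b), (rwin b); simpl; intuition congruence. Qed.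

Lemma outcome_ge_l a b : outcome_ge (o a) (o b) = true -> lwin b = true -> lwin a = true.
Proof. unfold o. destruct (lwin a), (rwin a), (lwin b), (rwin b); simpl; intuition congruence. Qed.

Lemma outcome_ge_ON a : outcome_ge (o a) ON = true <-> lwin a = true.
Proof. unfold o. destruct (lwin a), (rwin a); simpl; intuition congruence. Qed.

Inductive LDE : game -> Prop :=
  LDE_intro r : (forall x, In x r -> LDE x) -> LDE (Game [] r).

Lemma ldend_LDE g : left_dead_end g -> LDE g.
Proof.
  induction g as [l r IHl IHr] using game_ind'. intros H.
  assert (l = []) by (apply (H _ (subpos_refl _))). subst.
  constructor. intros x Hx. apply IHr; auto.
  intros s Hs. apply H. eapply subpos_right; eauto.
Qed.

Lemma LDE_add a b : LDE a -> LDE b -> LDE (add a b).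
Proof.
  intros Ha. revert b. induction Ha as [ra Ha IHa]. intros b Hb.
  induction Hb as [rb Hb IHb].
  assert (E : add (Game [] ra) (Game [] rb) = Game [] (map (fun x => add x (Game [] rb)) ra ++ map (fun y => add (Game [] ra) y) rb)) by reflexivity.
  rewrite E. constructor. intros x Hx. apply in_app_iff in Hx as [Hx|Hx]; apply in_map_iff in Hx as (y & <- & Hy).
  - apply IHa; auto. constructor; auto.
  - apply IHb; auto.
Qed.
Inductive sim : game -> game -> Prop :=
| sim0 : sim zero zero
| simR gr x : gr <> [] -> lefts x = [] ->
    (forall g', In g' gr -> exists x', In x' (rights x) /\ sim g' x') -> sim (Game [] gr) x.

Lemma sim_lefts G X : sim G X -> lefts G = [] /\ lefts X = [].
Proof. destruct 1; simpl; auto. Qed.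

Lemma M G : forall X, sim G X -> forall Y,
  (lwin (add X Y) = true -> lwin (add G Y) = true) /\
  (rwin (add G Y) = true -> rwin (add X Y) = true).
Proof.
  induction G as [gl gr IHGl IHGr] using game_ind'. intros X HS Y.
  destruct (sim_lefts _ _ HS) as [HlG HlX]. simpl in HlG. subst gl.
  induction Y as [yl yr IHYl IHYr] using game_ind'. split.
  - intros H. apply lwin_iff in H. apply lwin_iff.
    rewrite lefts_add, HlX in H. rewrite lefts_add. simpl in *.
    destruct H as [H|(x & Hx & Hr)].
    + left. destruct yl; simpl in *; congruence.
    + right. apply in_map_iff in Hx as (y & <- & Hy).
      exists (add (Game [] gr) y). split; [apply in_map; auto|].
      destruct (rwin (add (Game [] gr) y)) eqn:E; auto.
      apply (proj2 (IHYl y Hy)) in E. congruence.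
  - intros H. apply rwin_iff in H. apply rwin_iff.
    rewrite rights_add in H. rewrite rights_add. change (rights (Game [] gr)) with gr in H; change (rights (Game yl yr)) with yr in H.
    destruct H as [H|(x & Hx & Hl)].
    + apply app_eq_nil in H as [H1 H2]. apply map_eq_nil in H1. apply map_eq_nil in H2. subst gr yr.
      inversion HS as [|g1 x1 Hne]; [left; reflexivity|congruence].
    + right. apply in_app_iff in Hx as [Hx|Hx]; apply in_map_iff in Hx as (y & <- & Hy).
      * inversion HS as [|g1 x1 Hne Hlx H3]; subst; [destruct Hy|].
        destruct (H3 y Hy) as (x' & Hx' & Hs').
        exists (add x' (Game yl yr)). split.
        -- apply in_app_iff. left. apply in_map_iff. eauto.
        -- destruct (lwin (add x' (Game yl yr))) eqn:E; auto.
           apply (proj1 (IHGr y Hy x' Hs' _)) in E. congruence.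
      * exists (add X y). split.
        -- apply in_app_iff. right. apply in_map_iff. eauto.
        -- destruct (lwin (add X y)) eqn:E; auto.
           apply (proj1 (IHYr y Hy)) in E. congruence.
Qed.

Lemma rights_adjoint g : rights (adjoint g) = [zero].
Proof. destruct g as [[|] [|]]; reflexivity. Qed.

Lemma adjoint_ne r : r <> [] -> adjoint (Game [] r) = Game (map adjoint r) [zero].
Proof. destruct r; [congruence|reflexivity]. Qed.

Lemma lefts_add_zero X : lefts X = [] -> lefts (add zero X) = [].
Proof. intros H. rewrite lefts_add, H. reflexivity. Qed.

Lemma lwin_nolefts g : lefts g = [] -> lwin g = true.
Proof. intros H. apply lwin_iff. auto. Qed.

Lemma lose_sim G : LDE G -> forall X, LDE X -> lwin (add (adjoint G) X) = false -> sim G X.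
Proof.
  induction 1 as [r HG IH]. intros X HX H.
  destruct HX as [rx HX].
  destruct r as [|g0 r0].
  - change (adjoint (Game [] [])) with star in H. destruct rx as [|z t]; [constructor|exfalso].
    apply lwin_false in H as [_ H]. specialize (H (add zero (Game [] (z::t))) (or_introl eq_refl)).
    apply rwin_iff in H as [H|(x & Hx & Hl)]; [discriminate|].
    simpl in Hx. destruct Hx as [<-|Hx].
    + rewrite lwin_nolefts in Hl; [congruence|]. apply lefts_add_zero.
      destruct (HX z (or_introl eq_refl)); reflexivity.
    + apply in_map_iff in Hx as (y & <- & Hy).
      rewrite lwin_nolefts in Hl; [congruence|]. apply lefts_add_zero.
      destruct (HX y (or_intror Hy)); reflexivity.
  - rewrite adjoint_ne in H by congruence.
    apply lwin_false in H as [_ H].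
    constructor; [congruence|reflexivity|].
    intros g' Hg'. 
    assert (Hr : rwin (add (adjoint g') (Game [] rx)) = true).
    { apply H. rewrite lefts_add. apply in_app_iff. left.
      change (lefts (Game (map adjoint (g0::r0)) [zero])) with (map adjoint (g0::r0)).
      apply in_map_iff. exists (adjoint g'). split; [reflexivity|]. apply in_map_iff. eauto. }
    apply rwin_iff in Hr as [Hr|(x & Hx & Hl)].
    + rewrite rights_add, rights_adjoint in Hr. discriminate.
    + rewrite rights_add, rights_adjoint in Hx. simpl in Hx.
      destruct Hx as [<-|Hx].
      * rewrite lwin_nolefts in Hl; [congruence|]. reflexivity.
      * apply in_map_iff in Hx as (y & <- & Hy).
        exists y. split; [exact Hy|]. apply IH; auto.
Qed.
Lemma lwin_ext a b :
  (forall x, In x (lefts a) -> exists y, In y (lefts b) /\ rwin y = rwin x) ->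
  (forall y, In y (lefts b) -> exists x, In x (lefts a) /\ rwin y = rwin x) ->
  lwin a = lwin b.
Proof.
  intros H1 H2. apply eq_iff_eq_true. rewrite !lwin_iff. split.
  - intros [E|(x & Hx & Hr)].
    + left. destruct (lefts b) as [|y t]; auto. destruct (H2 y (or_introl eq_refl)) as (x & Hx & _).
      rewrite E in Hx. destruct Hx.
    + right. destruct (H1 x Hx) as (y & Hy & E). exists y. rewrite E. auto.
  - intros [E|(y & Hy & Hr)].
    + left. destruct (lefts a) as [|x t]; auto. destruct (H1 x (or_introl eq_refl)) as (y & Hy & _).
      rewrite E in Hy. destruct Hy.
    + right. destruct (H2 y Hy) as (x & Hx & E). exists x. rewrite <- E. auto.
Qed.

Lemma rwin_ext a b :
  (forall x, In x (rights a) -> exists y, In y (rights b) /\ lwin y = lwin x) ->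
  (forall y, In y (rights b) -> exists x, In x (rights a) /\ lwin y = lwin x) ->
  rwin a = rwin b.
Proof.
  intros H1 H2. apply eq_iff_eq_true. rewrite !rwin_iff. split.
  - intros [E|(x & Hx & Hr)].
    + left. destruct (rights b) as [|y t]; auto. destruct (H2 y (or_introl eq_refl)) as (x & Hx & _).
      rewrite E in Hx. destruct Hx.
    + right. destruct (H1 x Hx) as (y & Hy & E). exists y. rewrite E. auto.
  - intros [E|(y & Hy & Hr)].
    + left. destruct (rights a) as [|x t]; auto. destruct (H1 x (or_introl eq_refl)) as (y & Hy & _).
      rewrite E in Hy. destruct Hy.
    + right. destruct (H2 y Hy) as (x & Hx & E). exists x. rewrite <- E. auto.
Qed.

Lemma add_comm_win a : forall b, lwin (add a b) = lwin (add b a) /\ rwin (add a b) = rwin (add b a).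
Proof.
  induction a as [al ar IHal IHar] using game_ind'.
  induction b as [bl br IHbl IHbr] using game_ind'.
  split.
  - apply lwin_ext; rewrite !lefts_add; intros x Hx;
      apply in_app_iff in Hx as [Hx|Hx]; apply in_map_iff in Hx as (z & <- & Hz).
    + exists (add (Game bl br) z). split; [apply in_app_iff; right; apply in_map_iff; eauto|].
      first [apply (proj2 (IHal z Hz _)) | symmetry; apply (proj2 (IHal z Hz _))].
    + exists (add z (Game al ar)). split; [apply in_app_iff; left; apply in_map_iff; eauto|].
      first [apply (proj2 (IHbl z Hz)) | symmetry; apply (proj2 (IHbl z Hz))].
    + exists (add (Game al ar) z). split; [apply in_app_iff; right; apply in_map_iff; eauto|].
      first [apply (proj2 (IHbl z Hz)) | symmetry; apply (proj2 (IHbl z Hz))].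
    + exists (add z (Game bl br)). split; [apply in_app_iff; left; apply in_map_iff; eauto|].
      first [apply (proj2 (IHal z Hz _)) | symmetry; apply (proj2 (IHal z Hz _))].
  - apply rwin_ext; rewrite !rights_add; intros x Hx;
      apply in_app_iff in Hx as [Hx|Hx]; apply in_map_iff in Hx as (z & <- & Hz).
    + exists (add (Game bl br) z). split; [apply in_app_iff; right; apply in_map_iff; eauto|].
      first [apply (proj1 (IHar z Hz _)) | symmetry; apply (proj1 (IHar z Hz _))].
    + exists (add z (Game al ar)). split; [apply in_app_iff; left; apply in_map_iff; eauto|].
      first [apply (proj1 (IHbr z Hz)) | symmetry; apply (proj1 (IHbr z Hz))].
    + exists (add (Game al ar) z). split; [apply in_app_iff; right; apply in_map_iff; eauto|].
      first [apply (proj1 (IHbr z Hz)) | symmetry; apply (proj1 (IHbr z Hz))].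
    + exists (add z (Game bl br)). split; [apply in_app_iff; left; apply in_map_iff; eauto|].
      first [apply (proj1 (IHar z Hz _)) | symmetry; apply (proj1 (IHar z Hz _))].
Qed.

Lemma adjoint_P G : LDE G -> lwin (add G (adjoint G)) = false.
Proof.
  induction 1 as [r HG IH]. destruct r as [|g0 r0].
  - reflexivity.
  - rewrite adjoint_ne by congruence.
    destruct (lwin _) eqn:E; auto. exfalso.
    apply lwin_iff in E as [E|(x & Hx & Hr)].
    + rewrite lefts_add in E. discriminate.
    + rewrite lefts_add in Hx. apply in_app_iff in Hx as [Hx|Hx]; [destruct Hx|].
      change (lefts (Game (map adjoint (g0::r0)) [zero])) with (map adjoint (g0::r0)) in Hx.
      rewrite map_map in Hx. apply in_map_iff in Hx as (g' & <- & Hg').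
      assert (rwin (add (Game [] (g0 :: r0)) (adjoint g')) = true); [|congruence].
      apply rwin_iff. right. exists (add g' (adjoint g')). split; auto.
      rewrite rights_add. apply in_app_iff. left. apply in_map_iff. eauto.
Qed.

Lemma base_LDE U (HUE : forall g, U g -> in_E g) X : U X -> left_end X -> LDE X.
Proof.
  intros HX HL. destruct (HUE X HX X (subpos_refl _) (or_introl HL)) as [H|H].
  - apply ldend_LDE; auto.
  - assert (rights X = []) by apply (H _ (subpos_refl _)).
    destruct X as [l r]. unfold left_end in HL. simpl in *. subst. constructor. intros x [].
Qed.

Lemma cl_prop U (HU : universe U) (HUE : forall g, U g -> in_E g) h :
  cl (fun X => U X /\ left_end X) h -> U h /\ LDE h.
Proof.
  destruct HU as (Hid & Hl & Hr & Hadd & Hconj & Hgame).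
  induction 1 as [g [HX HL]|g x _ [HU HL] Hx|g x _ [HU HL] Hx|g h _ [H1 H2] _ [H3 H4]].
  - split; auto. eapply base_LDE; eauto.
  - destruct HL. destruct Hx.
  - split; [eauto|]. destruct HL as [r Hr']. apply Hr'. exact Hx.
  - split; auto. apply LDE_add; auto.
Qed.

Lemma lefts_ladjoint g : lefts (ladjoint g) = lefts (adjoint g).
Proof. destruct g as [[|] [|]]; reflexivity. Qed.
Lemma rights_ladjoint g : rights (ladjoint g) = [star].
Proof. destruct g as [[|] [|]]; reflexivity. Qed.

Lemma part2 U (HU : universe U) G (HS : left_strong U (adjoint G)) X : U X ->
  (lwin (add zero X) = true -> lwin (add (ladjoint G) X) = true) /\
  (rwin (add (ladjoint G) X) = true -> rwin (add zero X) = true).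
Proof.
  destruct HU as (Hid & Hl & Hr & Hadd & Hconj & Hgame).
  induction X as [xl xr IHl IHr] using game_ind'. intros HX. split.
  - intros H. apply lwin_iff in H as [H|(x & Hx & Hrw)].
    + rewrite lefts_add in H. simpl in H. destruct xl; [|discriminate].
      assert (E := HS _ HX eq_refl). apply outcome_ge_ON in E. rewrite <- E.
      apply lwin_lefts. rewrite !lefts_add, lefts_ladjoint. reflexivity.
    + rewrite lefts_add in Hx. apply in_app_iff in Hx as [[]|Hx]. apply in_map_iff in Hx as (y & <- & Hy).
      apply lwin_iff. right. exists (add (ladjoint G) y). split.
      * rewrite lefts_add. apply in_app_iff. right. apply in_map_iff. eauto.
      * destruct (rwin (add (ladjoint G) y)) eqn:E; auto. apply (proj2 (IHl y Hy (Hl _ _ HX Hy))) in E. congruence.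
  - intros H. apply rwin_iff in H as [H|(x & Hx & Hlw)].
    + rewrite rights_add, rights_ladjoint in H. discriminate.
    + rewrite rights_add, rights_ladjoint in Hx. apply in_app_iff in Hx as [[<-|[]]|Hx].
      * apply lwin_false in Hlw as [_ Hlw]. apply Hlw. rewrite lefts_add. apply in_app_iff. left. left. reflexivity.
      * apply in_map_iff in Hx as (y & <- & Hy).
        apply rwin_iff. right. exists (add zero y). split.
        -- rewrite rights_add. apply in_app_iff. right. apply in_map_iff. eauto.
        -- destruct (lwin (add zero y)) eqn:E; auto. apply (proj1 (IHr y Hy (Hr _ _ HX Hy))) in E. congruence.
Qed.

Lemma universe_all : universe (fun _ => True).
Proof. unfold universe. repeat split; auto. Qed.

Theorem mainTheorem3 (U : game -> Prop) (HU : universe U)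
  (HUE : forall g, U g -> in_E g) (G : game) (HG : left_dead_end G) :
  (~ up (fun X => U X /\ left_end X) G <-> left_strong U (adjoint G)) /\
  (left_strong U (adjoint G) <-> geU U (ladjoint G) zero).
Proof.
  assert (HGL : LDE G) by (apply ldend_LDE; auto).
  split; split.
  - intros Hnu X HX HL. apply outcome_ge_ON.
    destruct (lwin (add (adjoint G) X)) eqn:E; auto. exfalso. apply Hnu.
    split; [exact HG|]. exists X. split; [apply cl_base; auto|].
    assert (HS : sim G X) by (apply lose_sim; auto; eapply base_LDE; eauto).
    intros V _ Y _. apply outcome_ge_of; apply (M G X HS Y).
  - intros HS [_ (h & Hcl & Hd)].
    destruct (cl_prop U HU HUE h Hcl) as [Hh Hhl].
    assert (Hle : left_end h) by (destruct Hhl; reflexivity).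
    specialize (HS h Hh Hle). apply outcome_ge_ON in HS.
    specialize (Hd _ universe_all (adjoint G) I).
    rewrite (proj1 (add_comm_win (adjoint G) h)) in HS.
    pose proof (outcome_ge_l _ _ Hd HS) as C. rewrite adjoint_P in C; auto. discriminate.
  - intros HS X HX. apply outcome_ge_of; apply (part2 U HU G HS X HX).
  - intros Hge X HX HL. apply outcome_ge_ON.
    pose proof (outcome_ge_l _ _ (Hge X HX)) as C.
    rewrite <- C.
    + apply lwin_lefts. rewrite !lefts_add, lefts_ladjoint. unfold left_end in HL. rewrite HL. reflexivity.
    + apply lwin_nolefts. apply lefts_add_zero. exact HL.
Qed.
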